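(* Consider the threshold delay system (the ''TDE model'') described in the context and let $N_{T1}=f^{-1}(\lambda/\mu)$. Let $(\phi_1,\phi_2,\phi_3)^T\in D_{N_T}$ and let $(N,P,Z)^T:[0,\infty)\to\mathbb{R}^3$ be the solution of the corresponding initial value problem. If $N_T>N_{T1}$, then for any constant $\beta>N_T-N_{T1}$ there exists $t_1\ge t_0$ such that $P(t)<\beta$ for all $t\ge t_1$.
   Context: Standing assumptions: constants $\mu>\lambda>0$, $g>0$, $\gamma\in(0,1]$, $\delta>0$ with $\gamma g>\delta$, $\delta_0\ge 0$, $m>0$, $N_T>0$. The functions $f,h:[0,\infty)\to[0,\infty)$ are $C^1$ with $f(0)=0$, $f'>0$, $\lim_{N\to\infty}f(N)=1$ and $h(0)=0$, $h'>0$, $\lim_{P\to\infty}h(P)=1$. The function $R:[0,\infty)\to[0,\infty)$ is $C^1$ with $R\ge0$, $R'\ge0$, $R'(0)>0$ if $R(0)=0$, $\lim_{P\to\infty}R(P)=R_\infty<\infty$. For a function $P$ and $s\in[0,m]$, the delay $\tau(s,P_t)\ge0$ is defined implicitly by $\int_{-\tau(s,P_t)}^0 R(P(t+u))\,du=s$. TDE model, for $t\ge t_0$: $$N'(t)=-\mu P f(N)+\lambda P+\delta Z+(1-\gamma)gZh(P)+\delta_0(N_T-N-P-Z),$$ $$P'(t)=\mu P f(N)-\lambda P-gZh(P),$$ $$Z'(t)=R(P(t))e^{-\delta_0\tau(m,P_t)}\frac{\gamma g Z(t-\tau(m,P_t))h(P(t-\tau(m,P_t)))}{R(P(t-\tau(m,P_t)))}-\delta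 Z(t),$$ with initial conditions $N(t_0+t)=\phi_1(t)$, $P(t_0+t)=\phi_2(t)$, $Z(t_0+t)=\phi_3(t)$ for $t\in[-t_0,0]$. $D_{N_T}$ is the set of triples $(\phi_1,\phi_2,\phi_3)$ of continuous functions on $[-t_0,0]$ (some $t_0>0$) with $\phi_i>0$, $\int_{-t_0}^0R(\phi_2(u))\,du=m$, and $$N_T=\phi_1(0)+\phi_2(0)+\phi_3(0)+\int_0^m e^{-\delta_0\tau(s,\phi_2)}\frac{\gamma g\,\phi_3(-\tau(s,\phi_2))h(\phi_2(-\tau(s,\phi_2)))}{R(\phi_2(-\tau(s,\phi_2)))}\,ds,$$ where $\tau(s,\phi_2)\in[0,t_0]$ solves $\int_{-\tau(s,\phi_2)}^0R(\phi_2(u))\,du=s$. *)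

(* Defs.v *)
From Stdlib Require Import Reals.
From Coquelicot Require Import Coquelicot.
Open Scope R_scope.

Definition cont_within (D : R -> Prop) (u : R -> R) (x : R) : Prop :=
  filterlim u (within D (locally x)) (locally (u x)).

Definition nonneg (x : R) : Prop := 0 <= x.

(* u is C^1 on [0,oo) with derivative du (one-sided at 0, via continuity of du) *)
Definition C1_nonneg (u du : R -> R) : Prop :=
  (forall x, 0 < x -> is_derive u x (du x)) /\
  (forall x, 0 <= x -> cont_within nonneg du x) /\
  cont_within nonneg u 0.

Definition sat_fh (f fd : R -> R) : Prop :=
  C1_nonneg f fd /\ (forall x, 0 <= x -> 0 <= f x) /\ f 0 = 0 /\
  (forall x, 0 <= x -> 0 < fd x) /\ is_lim f p_infty 1.

Definition sat_R (Rf Rd : R -> R) : Prop :=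
  C1_nonneg Rf Rd /\ (forall x, 0 <= x -> 0 <= Rf x) /\
  (forall x, 0 <= x -> 0 <= Rd x) /\ (Rf 0 = 0 -> 0 < Rd 0) /\
  exists Rinf : R, is_lim Rf p_infty Rinf.

(* tau >= 0 solves  int_{-tau}^0 Rf (P (t+u)) du = s ;
   we also record tau <= t so that t - tau lies in the domain [0,oo) *)
Definition is_delay (Rf : R -> R) (P : R -> R) (t s tau : R) : Prop :=
  0 <= tau <= t /\ RInt (fun u => Rf (P (t + u))) (- tau) 0 = s.

Definition in_D (Rf h : R -> R) (gamma g delta0 m NT t0 : R)
    (phi1 phi2 phi3 : R -> R) : Prop :=
  0 < t0 /\
  (forall x, -t0 <= x <= 0 ->
     cont_within (fun y => -t0 <= y <= 0) phi1 x /\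
     cont_within (fun y => -t0 <= y <= 0) phi2 x /\
     cont_within (fun y => -t0 <= y <= 0) phi3 x /\
     0 < phi1 x /\ 0 < phi2 x /\ 0 < phi3 x) /\
  RInt (fun u => Rf (phi2 u)) (- t0) 0 = m /\
  exists tau : R -> R,
    (forall s, 0 <= s <= m ->
       0 <= tau s <= t0 /\ RInt (fun u => Rf (phi2 u)) (- tau s) 0 = s) /\
    NT = phi1 0 + phi2 0 + phi3 0 +
         RInt (fun s => exp (- delta0 * tau s) *
                  (gamma * g * phi3 (- tau s) * h (phi2 (- tau s)))
                  / Rf (phi2 (- tau s))) 0 m.

Definition is_solution (f h Rf : R -> R)
    (mu lambda g gamma delta delta0 m NT t0 : R)
    (phi1 phi2 phi3 N P Z : R -> R) : Prop :=
  (forall t, 0 <= t <= t0 ->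
     N t = phi1 (t - t0) /\ P t = phi2 (t - t0) /\ Z t = phi3 (t - t0)) /\
  (forall t, 0 <= t ->
     cont_within nonneg N t /\ cont_within nonneg P t /\ cont_within nonneg Z t) /\
  (forall t, t0 < t ->
     is_derive N t (- mu * P t * f (N t) + lambda * P t + delta * Z t
                    + (1 - gamma) * g * Z t * h (P t)
                    + delta0 * (NT - N t - P t - Z t)) /\
     is_derive P t (mu * P t * f (N t) - lambda * P t - g * Z t * h (P t)) /\
     exists tau : R,
       is_delay Rf P t m tau /\
       is_derive Z t (Rf (P t) * exp (- delta0 * tau) *
                      (gamma * g * Z (t - tau) * h (P (t - tau)))
                      / Rf (P (t - tau)) - delta * Z t)).

(* Main.v *)
Require Import Defs.
From Stdlib Require Import Reals Lra Classical ClassicalEpsilon.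
From Coquelicot Require Import Coquelicot.
Open Scope R_scope.

Lemma ball_R (x e y : R) : ball x e y <-> Rabs (y - x) < e.
Proof. reflexivity. Qed.

Lemma cw_eps D u x : cont_within D u x ->
  forall eps, 0 < eps -> exists del, 0 < del /\
   forall y, D y -> Rabs (y - x) < del -> Rabs (u y - u x) < eps.
Proof.
  intros H eps Heps.
  destruct (proj1 (filterlim_locally _ _) H (mkposreal eps Heps)) as [del Hd].
  exists del; split; [apply cond_pos|].
  intros y Dy Hy. apply (Hd y); auto.
Qed.

Lemma cont_eps u x : continuous u x ->
  forall eps, 0 < eps -> exists del, 0 < del /\
   forall y, Rabs (y - x) < del -> Rabs (u y - u x) < eps.
Proof.
  intros H eps Heps.
  destruct (proj1 (filterlim_locally _ _) H (mkposreal eps Heps)) as [del Hd].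
  exists del; split; [apply cond_pos|].
  intros y Hy. apply (Hd y); auto.
Qed.

Lemma eps_cont u x : (forall eps, 0 < eps -> exists del, 0 < del /\
   forall y, Rabs (y - x) < del -> Rabs (u y - u x) < eps) -> continuous u x.
Proof.
  intros H. apply filterlim_locally. intros [eps Heps].
  destruct (H eps Heps) as [del [Hd H']].
  exists (mkposreal del Hd). intros y Hy. apply H'. exact Hy.
Qed.

Lemma cw_cont D u x (del : R) : 0 < del -> (forall y, Rabs (y - x) < del -> D y) ->
  cont_within D u x -> continuous u x.
Proof.
  intros Hd HD H. apply eps_cont. intros eps He.
  destruct (cw_eps D u x H eps He) as [d [Hd' H']].
  exists (Rmin d del). split. apply Rmin_pos; auto.
  intros y Hy. apply H'. apply HD. apply Rlt_le_trans with (1:=Hy); apply Rmin_r.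
  apply Rlt_le_trans with (1:=Hy); apply Rmin_l.
Qed.

Lemma cw_nonneg_cont u x : 0 < x -> cont_within Defs.nonneg u x -> continuous u x.
Proof.
  intros Hx. apply cw_cont with x; auto.
  intros y Hy. unfold Defs.nonneg. apply Rabs_def2 in Hy. lra.
Qed.

Definition clamp (a b x : R) := Rmax a (Rmin x b).

Lemma clamp_in a b x : a <= b -> a <= clamp a b x <= b.
Proof. intros. unfold clamp, Rmax, Rmin. repeat destruct Rle_dec; lra. Qed.

Lemma clamp_id a b x : a <= x <= b -> clamp a b x = x.
Proof. intros. unfold clamp, Rmax, Rmin. repeat destruct Rle_dec; lra. Qed.

Lemma clamp_lip a b x y : a <= b -> Rabs (clamp a b y - clamp a b x) <= Rabs (y - x).
Proof. intros. unfold clamp, Rmax, Rmin. repeat destruct Rle_dec;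
  unfold Rabs; repeat destruct Rcase_abs; lra. Qed.

Lemma clamp_cont a b u : a <= b ->
  (forall x, a <= x <= b -> cont_within (fun y => a <= y <= b) u x) ->
  forall x, continuous (fun y => u (clamp a b y)) x.
Proof.
  intros Hab H x. apply eps_cont. intros eps He.
  destruct (cw_eps _ _ _ (H (clamp a b x) (clamp_in a b x Hab)) eps He) as [d [Hd H']].
  exists d; split; auto. intros y Hy. apply H'. apply clamp_in; auto.
  eapply Rle_lt_trans. apply clamp_lip; auto. auto.
Qed.

Lemma der_cpt (f : R -> R) (x l : R) : is_derive f x l -> continuity_pt f x.
Proof. intros H. apply continuity_pt_filterlim. apply (ex_derive_continuous (K:=R_AbsRing) (V:=R_NormedModule) f x). exists l; auto. Qed.

Lemma mvt_open (f : R -> R) (a b : R) : a < b ->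
  (forall x, a < x < b -> exists l, is_derive f x l) ->
  continuity_pt f a -> continuity_pt f b ->
  exists c l, a < c < b /\ is_derive f c l /\ f b - f a = l * (b - a).
Proof.
  intros Hab H Ha Hb.
  assert (pr1 : forall c, a < c < b -> derivable_pt f c).
  { intros c P. destruct (constructive_indefinite_description _ (H c P)) as [l Hl].
    exists l. apply is_derive_Reals; auto. }
  assert (pr2 : forall c, a < c < b -> derivable_pt id c).
  { intros c _. apply derivable_pt_id. }
  destruct (MVT f id a b pr1 pr2 Hab) as [c [P E]].
  - intros x Hx. destruct (Req_dec x a). subst; auto. destruct (Req_dec x b). subst; auto.
    destruct (H x) as [l Hl]. lra. eapply der_cpt; eauto.
  - intros x Hx. apply derivable_continuous_pt. apply derivable_pt_id.
  - destruct (H c P) as [l Hl]. exists c, l. split; auto. split; auto.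
    rewrite (derive_pt_eq_0 f c l (pr1 c P)) in E by (apply is_derive_Reals; auto).
    rewrite (derive_pt_eq_0 id c 1 (pr2 c P)) in E by apply derivable_pt_lim_id.
    unfold id in E. lra.
Qed.

Lemma deriv_le (f : R -> R) (a b c : R) : a < b ->
  (forall x, a < x < b -> exists l, is_derive f x l /\ l <= c) ->
  continuity_pt f a -> continuity_pt f b -> f b - f a <= c * (b - a).
Proof.
  intros Hab H Ha Hb.
  destruct (mvt_open f a b Hab) as [x [l [Hx [Hl E]]]]; auto.
  { intros x Hx. destruct (H x Hx) as [l [Hl _]]. eauto. }
  rewrite E. destruct (H x Hx) as [l' [Hl' Hc]].
  apply is_derive_unique in Hl'. apply is_derive_unique in Hl.
  rewrite <- Hl. rewrite Hl'. apply Rmult_le_compat_r; lra.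
Qed.

Lemma deriv_ge (f : R -> R) (a b c : R) : a < b ->
  (forall x, a < x < b -> exists l, is_derive f x l /\ c <= l) ->
  continuity_pt f a -> continuity_pt f b -> c * (b - a) <= f b - f a.
Proof.
  intros Hab H Ha Hb.
  destruct (mvt_open f a b Hab) as [x [l [Hx [Hl E]]]]; auto.
  { intros x Hx. destruct (H x Hx) as [l [Hl _]]. eauto. }
  rewrite E. destruct (H x Hx) as [l' [Hl' Hc]].
  apply is_derive_unique in Hl'. apply is_derive_unique in Hl.
  rewrite <- Hl. rewrite Hl'. apply Rmult_le_compat_r; lra.
Qed.

Lemma deriv_left_ge (f : R -> R) (s l rho : R) : 0 < rho -> is_derive f s l ->
  (forall x, s - rho < x < s -> f x <= f s) -> 0 <= l.
Proof.
  intros Hr Hd H. apply is_derive_Reals in Hd.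
  destruct (Rle_or_lt 0 l) as [|Hl]; auto.
  destruct (Hd (- l / 2)) as [del Hdel]. lra.
  set (h := - Rmin del rho / 2).
  assert (Hpos : 0 < Rmin del rho) by (apply Rmin_pos; [apply cond_pos|lra]).
  assert (Hh : h <> 0) by (unfold h; lra).
  assert (Hh2 : Rabs h < del).
  { unfold h. rewrite Rabs_left by lra. pose proof (Rmin_l del rho). lra. }
  specialize (Hdel h Hh Hh2).
  assert (Hq : 0 <= (f (s + h) - f s) / h).
  { assert (f (s + h) <= f s). apply H. unfold h. pose proof (Rmin_r del rho). lra.
    assert (h < 0) by (unfold h; lra).
    replace ((f (s + h) - f s) / h) with ((f s - f (s + h)) / (- h)) by (field; lra).
    apply Rdiv_le_0_compat; lra. }
  apply Rabs_def2 in Hdel. lra.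
Qed.

Lemma cc (f : R -> R) x : continuous f x <-> continuity_pt f x.
Proof. split; intro H; apply continuity_pt_filterlim; auto. Qed.

Lemma exRI (r : R -> R) a b : (forall x, continuous r x) -> ex_RInt r a b.
Proof. intros H. apply (ex_RInt_continuous (V:=R_CompleteNormedModule)). intros; apply H. Qed.

Lemma der_int (r : R -> R) (c x : R) : (forall x, continuous r x) ->
  is_derive (fun y => RInt r c y) x (r x).
Proof.
  intros H. apply (is_derive_RInt (V:=R_NormedModule) r (fun y => RInt r c y) c x).
  - apply filter_forall. intros y. apply (RInt_correct (V:=R_CompleteNormedModule)). apply exRI; auto.
  - apply H.
Qed.

Lemma Q_incr (r : R -> R) x y : (forall x, continuous r x) -> (forall x, 0 < r x) ->
  x < y -> RInt r 0 x < RInt r 0 y.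
Proof.
  intros Hc Hp Hxy.
  destruct (mvt_open (fun y => RInt r 0 y) x y Hxy) as [c [l [Hc' [Hl E]]]].
  - intros z _. exists (r z). apply der_int; auto.
  - eapply der_cpt. apply (der_int r 0 x); auto.
  - eapply der_cpt. apply (der_int r 0 y); auto.
  - pose proof (der_int r 0 c Hc) as Hd.
    assert (l = r c) by (rewrite <- (is_derive_unique _ _ _ Hl); apply is_derive_unique; auto).
    subst l. pose proof (Hp c).
    assert (0 < r c * (y - x)) by (apply Rmult_lt_0_compat; lra). lra.
Qed.

Lemma Q_incr_inv (r : R -> R) x y : (forall x, continuous r x) -> (forall x, 0 < r x) ->
  RInt r 0 x < RInt r 0 y -> x < y.
Proof.
  intros Hc Hp H. destruct (Rlt_or_le x y) as [|H']; auto.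
  destruct (Rle_lt_or_eq_dec _ _ H') as [H2|H2].
  - pose proof (Q_incr r y x Hc Hp H2). lra.
  - subst. lra.
Qed.

Lemma Q_surj (r : R -> R) (b : R) : 0 <= b -> (forall x, continuous r x) -> (forall x, 0 < r x) ->
  (forall x, b <= x -> r x = r b) -> (forall x, x <= 0 -> r x = r 0) ->
  forall s, exists x, RInt r 0 x = s.
Proof.
  intros Hb Hc Hp Hhi Hlo s.
  set (Q := fun y => RInt r 0 y).
  assert (HQc : continuity Q).
  { intros y. eapply der_cpt. apply (der_int r 0 y Hc). }
  assert (Hup : forall x, b < x -> Q b + r b * (x - b) <= Q x).
  { intros x Hx. apply Rplus_le_reg_r with (- Q b).
    replace (Q b + r b * (x - b) + - Q b) with (r b * (x - b)) by ring.
    apply deriv_ge; auto.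
    intros z Hz. exists (r z). split. apply der_int; auto. rewrite (Hhi z); lra. }
  assert (Hdn : forall x, x < 0 -> Q x <= r 0 * x).
  { intros x Hx. assert (Q0 : Q 0 = 0) by (unfold Q; rewrite RInt_point; auto).
    assert (r 0 * (0 - x) <= Q 0 - Q x).
    { apply deriv_ge; auto.
      intros z Hz. exists (r z). split. apply der_int; auto. rewrite (Hlo z); lra. }
    lra. }
  pose proof (Hp b) as Hpb. pose proof (Hp 0) as Hp0.
  set (x1 := b + Rabs (s - Q b) / r b + 1).
  set (x2 := - (Rabs s / r 0 + 1)).
  assert (0 <= Rabs (s - Q b) / r b) by (apply Rdiv_le_0_compat; [apply Rabs_pos|lra]).
  assert (0 <= Rabs s / r 0) by (apply Rdiv_le_0_compat; [apply Rabs_pos|lra]).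
  assert (H1 : s < Q x1).
  { assert (b < x1) by (unfold x1; lra). specialize (Hup x1 H1).
    replace (x1 - b) with (Rabs (s - Q b) / r b + 1) in Hup by (unfold x1; ring).
    rewrite Rmult_plus_distr_l in Hup. replace (r b * (Rabs (s - Q b) / r b)) with (Rabs (s - Q b)) in Hup by (field; lra).
    pose proof (Rle_abs (s - Q b)). lra. }
  assert (H2 : Q x2 < s).
  { assert (x2 < 0) by (unfold x2; lra). specialize (Hdn x2 H2).
    replace (r 0 * x2) with (- Rabs s - r 0) in Hdn by (unfold x2; field; lra).
    pose proof (Rle_abs (- s)). rewrite Rabs_Ropp in H3. lra. }
  destruct (IVT_gen Q x1 x2 s HQc) as [x [_ Hx]].
  { split. apply Rle_trans with (Q x2). apply Rmin_r. lra. apply Rle_trans with (Q x1). lra. apply Rmax_l. }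
  exists x; auto.
Qed.

Definition Tinv (r : R -> R) (s : R) : R :=
  epsilon (inhabits 0) (fun x => RInt r 0 x = s).

Lemma Tinv_spec (r : R -> R) (b : R) : 0 <= b -> (forall x, continuous r x) -> (forall x, 0 < r x) ->
  (forall x, b <= x -> r x = r b) -> (forall x, x <= 0 -> r x = r 0) ->
  (forall s, RInt r 0 (Tinv r s) = s) /\ (forall x, Tinv r (RInt r 0 x) = x)
  /\ (forall s, continuous (Tinv r) s).
Proof.
  intros Hb Hc Hp Hhi Hlo.
  assert (HS : forall s, RInt r 0 (Tinv r s) = s).
  { intros s. unfold Tinv. apply epsilon_spec. apply Q_surj with b; auto. }
  assert (HT : forall x, Tinv r (RInt r 0 x) = x).
  { intros x. set (y := Tinv r (RInt r 0 x)). assert (E := HS (RInt r 0 x)). fold y in E.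
    destruct (Rtotal_order x y) as [H|[H|H]]; auto.
    - pose proof (Q_incr r x y Hc Hp H). lra.
    - pose proof (Q_incr r y x Hc Hp H). lra. }
  split; auto. split; auto.
  intros s. apply eps_cont. intros eps He.
  set (x0 := Tinv r s).
  pose proof (Q_incr r (x0 - eps) x0 Hc Hp ltac:(lra)) as H1.
  pose proof (Q_incr r x0 (x0 + eps) Hc Hp ltac:(lra)) as H2.
  exists (Rmin (RInt r 0 x0 - RInt r 0 (x0 - eps)) (RInt r 0 (x0 + eps) - RInt r 0 x0)).
  split. apply Rmin_pos; lra.
  intros y Hy. apply Rabs_def2 in Hy. destruct Hy as [Hy1 Hy2].
  pose proof (Rmin_l (RInt r 0 x0 - RInt r 0 (x0 - eps)) (RInt r 0 (x0 + eps) - RInt r 0 x0)).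
  pose proof (Rmin_r (RInt r 0 x0 - RInt r 0 (x0 - eps)) (RInt r 0 (x0 + eps) - RInt r 0 x0)).
  assert (Ex0 : RInt r 0 x0 = s) by apply HS.
  assert (Ey : RInt r 0 (Tinv r y) = y) by apply HS.
  assert (A1 : x0 - eps < Tinv r y). { apply (Q_incr_inv r); auto. lra. }
  assert (A2 : Tinv r y < x0 + eps). { apply (Q_incr_inv r); auto. lra. }
  apply Rabs_def1; fold x0; lra.
Qed.

Lemma pos_mono (F dF : R -> R) x y : 0 < x < y -> (forall z, 0 < z -> is_derive F z (dF z)) ->
  (forall z, x < z < y -> 0 <= dF z) -> F x <= F y.
Proof.
  intros Hxy Hd Hp.
  assert (0 * (y - x) <= F y - F x).
  { apply deriv_ge. lra. intros z Hz. exists (dF z). split. apply Hd; lra. apply Hp; auto.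
    eapply der_cpt; apply Hd; lra. eapply der_cpt; apply Hd; lra. }
  lra.
Qed.

Lemma pos_smono (F dF : R -> R) x y : 0 < x < y -> (forall z, 0 < z -> is_derive F z (dF z)) ->
  (forall z, x < z < y -> 0 < dF z) -> F x < F y.
Proof.
  intros Hxy Hd Hp.
  destruct (mvt_open F x y) as [c [l [Hc [Hl E]]]]. lra.
  intros z Hz. exists (dF z). apply Hd; lra.
  eapply der_cpt; apply Hd; lra. eapply der_cpt; apply Hd; lra.
  assert (l = dF c) by (rewrite <- (is_derive_unique _ _ _ Hl); apply is_derive_unique; apply Hd; lra).
  subst l. pose proof (Hp c Hc). assert (0 < dF c * (y - x)) by (apply Rmult_lt_0_compat; lra). lra.
Qed.

Lemma fh_cont f fd x : sat_fh f fd -> 0 < x -> continuous f x.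
Proof. intros [[Hd _] _] Hx. apply (ex_derive_continuous (K:=R_AbsRing) (V:=R_NormedModule)). exists (fd x). auto. Qed.

Lemma fh_nonneg f fd x : sat_fh f fd -> 0 <= x -> 0 <= f x.
Proof. intros [_ [H _]]. auto. Qed.

Lemma f_mono f fd x y : sat_fh f fd -> 0 <= x <= y -> f x <= f y.
Proof.
  intros Hf Hxy. destruct Hf as [[Hd [Hc Hc0]] [Hn [H0 [Hp _]]]].
  destruct (Req_dec x y). subst; lra.
  destruct (Req_dec x 0). subst. rewrite H0. apply Hn; lra.
  apply pos_mono with fd. lra. auto. intros; left; apply Hp; lra.
Qed.

Lemma f_smono f fd x y : sat_fh f fd -> 0 <= x < y -> f x < f y.
Proof.
  intros Hf Hxy. pose proof Hf as Hf'. destruct Hf as [[Hd [Hc Hc0]] [Hn [H0 [Hp _]]]].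
  destruct (Req_dec x 0).
  - subst. apply Rle_lt_trans with (f (y/2)). apply f_mono with fd; auto; lra.
    apply pos_smono with fd. lra. auto. intros; apply Hp; lra.
  - apply pos_smono with fd. lra. auto. intros; apply Hp; lra.
Qed.

Lemma f_small f fd c : sat_fh f fd -> 0 < c -> exists eta, 0 < eta /\ forall x, 0 <= x < eta -> f x < c.
Proof.
  intros Hf Hc. destruct Hf as [[Hd [Hcd Hc0]] [Hn [H0 [Hp _]]]].
  destruct (cw_eps _ _ _ Hc0 c Hc) as [d [Hdd H]]. exists d. split; auto.
  intros x Hx. assert (A : Rabs (x - 0) < d) by (rewrite Rminus_0_r, Rabs_right; lra).
  specialize (H x (proj1 Hx) A). rewrite H0, Rminus_0_r in H. apply Rabs_def2 in H. lra.
Qed.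

Lemma h_lin h hd : sat_fh h hd -> exists L eta, 0 <= L /\ 0 < eta /\ forall x, 0 <= x < eta -> h x <= L * x.
Proof.
  intros Hf. destruct Hf as [[Hd [Hcd Hc0]] [Hn [H0 [Hp _]]]].
  destruct (cw_eps _ _ _ (Hcd 0 (Rle_refl 0)) 1 Rlt_0_1) as [d [Hdd H]].
  exists (Rabs (hd 0) + 1), d. split. pose proof (Rabs_pos (hd 0)); lra. split; auto.
  intros x Hx. destruct (Req_dec x 0). subst; rewrite H0; lra.
  destruct (Rle_or_lt (h x) ((Rabs (hd 0) + 1) * x)) as [|Hc]; auto. exfalso.
  set (ep := h x - (Rabs (hd 0) + 1) * x).
  destruct (cw_eps _ _ _ Hc0 ep ltac:(unfold ep; lra)) as [d2 [Hd2 H2]].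
  set (e := Rmin x d2 / 2).
  assert (He : 0 < e < x). { unfold e. pose proof (Rmin_l x d2). pose proof (Rmin_r x d2). assert (0 < Rmin x d2) by (apply Rmin_pos; lra). lra. }
  assert (He2 : e < d2). { unfold e. pose proof (Rmin_r x d2). lra. }
  specialize (H2 e ltac:(unfold Defs.nonneg; lra) ltac:(rewrite Rminus_0_r; rewrite Rabs_right; lra)).
  rewrite H0, Rminus_0_r in H2. apply Rabs_def2 in H2.
  assert (h x - h e <= (Rabs (hd 0) + 1) * (x - e)).
  { apply deriv_le. lra. intros z Hz. exists (hd z). split. apply Hd; lra.
    assert (Hz1 : Rabs (hd z - hd 0) < 1). apply H. unfold Defs.nonneg; lra. rewrite Rminus_0_r, Rabs_right; lra.
    apply Rabs_def2 in Hz1. pose proof (Rle_abs (hd 0)). lra.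
    eapply der_cpt; apply Hd; lra. eapply der_cpt; apply Hd; lra. }
  pose proof (Rabs_pos (hd 0)).
  assert (0 <= (Rabs (hd 0) + 1) * e) by (apply Rmult_le_pos; lra).
  unfold ep in H2. lra.
Qed.

Lemma Rf_pos Rf Rd x : sat_R Rf Rd -> 0 < x -> 0 < Rf x.
Proof.
  intros HR Hx. destruct HR as [[Hd [Hcd Hc0]] [Hn [Hdn [H0 _]]]].
  assert (Hmono : forall y, 0 < y <= x -> Rf y <= Rf x).
  { intros y Hy. destruct (Req_dec y x). subst; lra. apply pos_mono with Rd. lra. auto. intros; apply Hdn; lra. }
  destruct (Req_dec (Rf 0) 0) as [E|E].
  - specialize (H0 E).
    destruct (cw_eps _ _ _ (Hcd 0 (Rle_refl 0)) (Rd 0 / 2) ltac:(lra)) as [d [Hdd H]].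
    set (y := Rmin x d / 2).
    assert (Hy : 0 < y <= x /\ y < d). { unfold y. pose proof (Rmin_l x d). pose proof (Rmin_r x d). assert (0 < Rmin x d) by (apply Rmin_pos; lra). lra. }
    assert (Rf (y/2) < Rf y).
    { apply pos_smono with Rd. lra. auto. intros z Hz.
      assert (Hz1 : Rabs (Rd z - Rd 0) < Rd 0 / 2). apply H. unfold Defs.nonneg; lra. rewrite Rminus_0_r, Rabs_right; lra.
      apply Rabs_def2 in Hz1. lra. }
    pose proof (Hn (y/2) ltac:(lra)). pose proof (Hmono y ltac:(lra)). lra.
  - assert (Hf0 : 0 < Rf 0) by (pose proof (Hn 0 (Rle_refl 0)); lra).
    destruct (cw_eps _ _ _ Hc0 (Rf 0 / 2) ltac:(lra)) as [d [Hdd H]].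
    set (y := Rmin x d / 2).
    assert (Hy : 0 < y <= x /\ y < d). { unfold y. pose proof (Rmin_l x d). pose proof (Rmin_r x d). assert (0 < Rmin x d) by (apply Rmin_pos; lra). lra. }
    assert (Hz1 : Rabs (Rf y - Rf 0) < Rf 0 / 2). apply H. unfold Defs.nonneg; lra. rewrite Rminus_0_r, Rabs_right; lra.
    apply Rabs_def2 in Hz1. pose proof (Hmono y ltac:(lra)). lra.
Qed.

Lemma Rf_cont Rf Rd x : sat_R Rf Rd -> 0 < x -> continuous Rf x.
Proof. intros [[Hd _] _] Hx. apply (ex_derive_continuous (K:=R_AbsRing) (V:=R_NormedModule)). exists (Rd x). auto. Qed.

Lemma chasR (r : R -> R) a b c : (forall x, continuous r x) -> RInt r a b + RInt r b c = RInt r a c.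
Proof. intros H. apply (RInt_Chasles (V:=R_CompleteNormedModule)); apply exRI; auto. Qed.

Lemma shiftR (r : R -> R) a b t : (forall x, continuous r x) ->
  RInt (fun y => r (y + t)) a b = RInt r (a + t) (b + t).
Proof.
  intros H. replace (a + t) with (1 * a + t) by ring. replace (b + t) with (1 * b + t) by ring.
  rewrite <- (RInt_comp_lin (V:=R_CompleteNormedModule) r 1 t a b).
  apply RInt_ext. intros x _. change (scal 1 (r (1 * x + t))) with (1 * r (1 * x + t)).
  rewrite !Rmult_1_l. reflexivity. apply exRI; auto.
Qed.

Lemma reflR (r : R -> R) c : (forall x, continuous r x) ->
  RInt (fun s => r (c - s)) 0 c = RInt r 0 c.
Proof.
  intros H.
  assert (E := RInt_comp_lin (V:=R_CompleteNormedModule) r (-1) c 0 c (exRI r _ _ H)).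
  replace (-1 * 0 + c) with c in E by ring. replace (-1 * c + c) with 0 in E by ring.
  rewrite (RInt_scal (V:=R_CompleteNormedModule) (fun y => r (-1 * y + c)) 0 c (-1)) in E.
  - rewrite <- (opp_RInt_swap (V:=R_CompleteNormedModule) r 0 c (exRI r 0 c H)) in E.
    change (-1 * RInt (fun y => r (-1 * y + c)) 0 c = - RInt r 0 c) in E.
    rewrite <- (RInt_ext (fun y => r (c - y))) in E. lra.
    intros x _. f_equal. ring.
  - apply exRI. intros x. apply (continuous_comp (fun y => -1 * y + c) r). 
    apply cc. apply continuity_pt_plus. apply continuity_pt_scal. apply continuity_pt_id. apply continuity_pt_const; intros a b; auto.
    apply H.
Qed.

Lemma scalR (r : R -> R) a b c : (forall x, continuous r x) ->
  RInt (fun x => c * r x) a b = c * RInt r a b.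
Proof.
  intros H. apply (RInt_scal (V:=R_CompleteNormedModule) r a b c). apply exRI; auto.
Qed.

Lemma cw_sub (D D' : R -> Prop) u x : (forall y, D' y -> D y) -> cont_within D u x -> cont_within D' u x.
Proof.
  intros HD H. unfold cont_within, filterlim, filter_le, filtermap, within in *.
  intros Pr HP. specialize (H Pr HP). simpl in *. eapply filter_imp; [|exact H].
  intros y Hy Hy'. apply Hy. auto.
Qed.

Lemma cont_mul (f g : R -> R) x : continuous f x -> continuous g x -> continuous (fun y => f y * g y) x.
Proof. intros. apply cc. apply (continuity_pt_mult f g); apply cc; auto. Qed.

Lemma cont_div (f g : R -> R) x : continuous f x -> continuous g x -> g x <> 0 -> continuous (fun y => f y / g y) x.
Proof. intros. apply cc. apply (continuity_pt_div f g); try apply cc; auto. Qed.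

Lemma cont_add (f g : R -> R) x : continuous f x -> continuous g x -> continuous (fun y => f y + g y) x.
Proof. intros. apply cc. apply (continuity_pt_plus f g); apply cc; auto. Qed.

Lemma cont_sub (f g : R -> R) x : continuous f x -> continuous g x -> continuous (fun y => f y - g y) x.
Proof. intros. apply cc. apply (continuity_pt_minus f g); apply cc; auto. Qed.

Lemma cont_cst (c x : R) : continuous (fun _ : R => c) x.
Proof. apply cc. apply continuity_pt_const. intros a b; auto. Qed.

Lemma cont_o (f g : R -> R) x : continuous f x -> continuous g (f x) -> continuous (fun y => g (f y)) x.
Proof. intros. apply (continuous_comp f g x); auto. Qed.

Lemma clamp_hi b x : 0 <= b -> b <= x -> clamp 0 b x = b.
Proof. intros. unfold clamp, Rmax, Rmin. repeat destruct Rle_dec; lra. Qed.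
Lemma clamp_lo b x : 0 <= b -> x <= 0 -> clamp 0 b x = 0.
Proof. intros. unfold clamp, Rmax, Rmin. repeat destruct Rle_dec; lra. Qed.

Lemma conservation (mu lambda g gamma delta delta0 m NT : R) (f fd h hd Rf Rd : R -> R)
  (Hgamma : 0 < gamma <= 1) (Hg : g > 0) (Hm : m > 0)
  (Hh : sat_fh h hd) (HR : sat_R Rf Rd)
  (t0 : R) (phi1 phi2 phi3 : R -> R)
  (Hphi : in_D Rf h gamma g delta0 m NT t0 phi1 phi2 phi3)
  (N P Z : R -> R)
  (Hsol : is_solution f h Rf mu lambda g gamma delta delta0 m NT t0 phi1 phi2 phi3 N P Z)
  (b : R) (Hb : t0 < b)
  (Hgood : forall s, 0 <= s <= b -> 0 < N s /\ 0 < P s /\ 0 < Z s) :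
  forall t, t0 < t < b -> N t + P t + Z t <= NT.
Proof.
  destruct Hphi as [Ht0 [Hphic [Hm0 [tauD [HtauD HNT]]]]].
  destruct Hsol as [Hinit [Hcont Hder]].
  assert (Hb0 : 0 <= b) by lra.
  set (Pt := fun x => P (clamp 0 b x)).
  set (Zt := fun x => Z (clamp 0 b x)).
  assert (HPtc : forall x, continuous Pt x).
  { apply clamp_cont; auto. intros x Hx. apply cw_sub with Defs.nonneg.
    intros y Hy; unfold Defs.nonneg; lra. destruct (Hcont x ltac:(lra)) as [_ [HH _]]; exact HH. }
  assert (HZtc : forall x, continuous Zt x).
  { apply clamp_cont; auto. intros x Hx. apply cw_sub with Defs.nonneg.
    intros y Hy; unfold Defs.nonneg; lra. destruct (Hcont x ltac:(lra)) as [_ [_ HH]]; exact HH. }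
  assert (HPtp : forall x, 0 < Pt x).
  { intros x. apply Hgood. apply clamp_in; auto. }
  assert (HZtp : forall x, 0 < Zt x).
  { intros x. apply Hgood. apply clamp_in; auto. }
  set (r := fun u => Rf (Pt u)).
  assert (Hrc : forall x, continuous r x).
  { intros x. apply (cont_o Pt Rf). apply HPtc. apply Rf_cont with Rd. exact HR. apply HPtp. }
  assert (Hrp : forall x, 0 < r x).
  { intros x. apply (Rf_pos Rf Rd (Pt x) HR (HPtp x)). }
  assert (Hrhi : forall x, b <= x -> r x = r b).
  { intros x Hx. unfold r, Pt. rewrite !clamp_hi; auto; lra. }
  assert (Hrlo : forall x, x <= 0 -> r x = r 0).
  { intros x Hx. unfold r, Pt. rewrite !clamp_lo; auto; lra. }
  destruct (Tinv_spec r b Hb0 Hrc Hrp Hrhi Hrlo) as [HS [HT HTc]].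
  set (T := Tinv r) in *.
  set (Q := fun x => RInt r 0 x).
  set (k := fun s => exp (delta0 * T s) * (gamma * g * Zt (T s) * h (Pt (T s))) / Rf (Pt (T s))).
  assert (Hkc : forall s, continuous k s).
  { intros s. apply (cont_div (fun s => exp (delta0 * T s) * (gamma * g * Zt (T s) * h (Pt (T s)))) (fun s => Rf (Pt (T s)))).
    - apply (cont_mul (fun s => exp (delta0 * T s)) (fun s => gamma * g * Zt (T s) * h (Pt (T s)))).
      + apply (cont_o (fun s => delta0 * T s) exp). apply (cont_mul (fun _ => delta0) T). apply cont_cst. apply HTc. apply continuous_exp.
      + apply (cont_mul (fun s => gamma * g * Zt (T s)) (fun s => h (Pt (T s)))).
        * apply (cont_mul (fun _ => gamma * g) (fun s => Zt (T s))). apply cont_cst. apply (cont_o T Zt). apply HTc. apply HZtc.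
        * apply (cont_o (fun s => Pt (T s)) h). apply (cont_o T Pt). apply HTc. apply HPtc. apply fh_cont with hd; auto.
    - apply (cont_o (fun s => Pt (T s)) Rf). apply (cont_o T Pt). apply HTc. apply HPtc. apply Rf_cont with Rd; auto.
    - apply Rgt_not_eq. apply Rf_pos with Rd; auto. }
  assert (Hkp : forall s, 0 <= k s).
  { intros s. unfold k. apply Rdiv_le_0_compat. apply Rmult_le_pos. left; apply exp_pos.
    apply Rmult_le_pos. apply Rmult_le_pos. nra. left; auto. apply fh_nonneg with hd; auto. left; auto.
    apply Rf_pos with Rd; auto. }
  set (K := fun s => RInt k 0 s).
  set (V := fun t => exp (delta0 * t) * (N t + P t + Z t - NT) + (K (Q t) - K (Q t - m))).
  assert (HQd : forall x, is_derive Q x (r x)) by (intros; apply der_int; auto).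
  assert (HKd : forall s, is_derive K s (k s)) by (intros; apply der_int; auto).
  assert (HQc : forall x, continuous Q x).
  { intros x. apply (ex_derive_continuous (K:=R_AbsRing) (V:=R_NormedModule)). exists (r x); auto. }
  assert (HKc : forall x, continuous K x).
  { intros x. apply (ex_derive_continuous (K:=R_AbsRing) (V:=R_NormedModule)). exists (k x); auto. }
  assert (HPt_eq : forall x, 0 <= x <= b -> Pt x = P x).
  { intros x Hx. unfold Pt. rewrite clamp_id; auto. }
  assert (HZt_eq : forall x, 0 <= x <= b -> Zt x = Z x).
  { intros x Hx. unfold Zt. rewrite clamp_id; auto. }
  assert (Hdel : forall t tau, t0 < t < b -> is_delay Rf P t m tau -> Q (t - tau) = Q t - m /\ 0 <= t - tau <= b).
  { intros t tau Ht [Htau Hint].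
    assert (E1 : RInt (fun u => Rf (P (t + u))) (- tau) 0 = RInt (fun y => r (y + t)) (- tau) 0).
    { apply RInt_ext. intros x Hx. rewrite Rmin_left in Hx by lra. rewrite Rmax_right in Hx by lra.
      unfold r. rewrite HPt_eq by lra. f_equal. f_equal. ring. }
    rewrite E1, shiftR in Hint by auto.
    replace (- tau + t) with (t - tau) in Hint by ring. replace (0 + t) with t in Hint by ring.
    pose proof (chasR r 0 (t - tau) t Hrc). unfold Q. split; lra. }
  set (g0 := fun v => r (v + t0)).
  assert (Hg0c : forall x, continuous g0 x).
  { intros x. apply (cont_o (fun v => v + t0) r). apply cc. apply continuity_pt_plus.
    apply continuity_pt_id. apply continuity_pt_const; intros a c; auto. apply Hrc. }
  assert (Hg0 : forall a c, - t0 <= a <= 0 -> - t0 <= c <= 0 ->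
     RInt (fun u => Rf (phi2 u)) a c = RInt g0 a c).
  { intros a c Ha Hc. apply RInt_ext. intros x Hx.
    assert (- t0 < x < 0). { split. apply Rle_lt_trans with (Rmin a c). apply Rmin_glb; lra. lra.
       apply Rlt_le_trans with (Rmax a c). lra. apply Rmax_lub; lra. }
    unfold g0, r. rewrite HPt_eq by lra. destruct (Hinit (x + t0)) as [_ [HP _]]. lra.
    rewrite HP. do 2 f_equal. ring. }
  assert (HQi : forall x, 0 <= x <= t0 -> Q x = RInt g0 (- t0) (x - t0)).
  { intros x Hx. unfold g0. rewrite shiftR by auto. unfold Q. f_equal; ring. }
  assert (HQt0 : Q t0 = m).
  { rewrite HQi by lra. replace (t0 - t0) with 0 by ring. rewrite <- Hg0 by lra. auto. }
  assert (HQtau : forall s, 0 <= s <= m -> Q (t0 - tauD s) = m - s /\ T (m - s) = t0 - tauD s).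
  { intros s Hs. destruct (HtauD s Hs) as [Ht Hi].
    assert (Q (t0 - tauD s) = m - s).
    { rewrite HQi by lra. replace (t0 - tauD s - t0) with (- tauD s) by ring.
      rewrite Hg0 in Hm0, Hi by lra. pose proof (chasR g0 (- t0) (- tauD s) 0 Hg0c). lra. }
    split; auto. rewrite <- H. unfold T, Q. apply HT. }
  assert (HV0 : V t0 = 0).
  { unfold V. rewrite HQt0. replace (m - m) with 0 by ring.
    assert (HK0 : K 0 = 0) by (unfold K; rewrite RInt_point; reflexivity).
    rewrite HK0.
    destruct (Hinit t0) as [HN0 [HP0 HZ0]]. lra.
    replace (t0 - t0) with 0 in * by ring.
    assert (EK : K m = exp (delta0 * t0) * (NT - (phi1 0 + phi2 0 + phi3 0))).
    { unfold K. rewrite <- reflR by auto.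
      assert (HJ : @eq R (NT - (phi1 0 + phi2 0 + phi3 0)) (RInt (fun s => exp (- delta0 * tauD s) * (gamma * g * phi3 (- tauD s) * h (phi2 (- tauD s))) /
                Rf (phi2 (- tauD s))) 0 m)) by (rewrite HNT; lra).
      rewrite HJ.
      rewrite (RInt_ext (fun s => exp (- delta0 * tauD s) * (gamma * g * phi3 (- tauD s) * h (phi2 (- tauD s))) /
                Rf (phi2 (- tauD s))) (fun s => exp (- delta0 * t0) * k (m - s))).
      - rewrite (scalR (fun s => k (m - s))).
        rewrite <- Rmult_assoc, <- exp_plus. replace (delta0 * t0 + - delta0 * t0) with 0 by ring.
        rewrite exp_0, Rmult_1_l. reflexivity.
        intros x. apply (cont_o (fun s => m - s) k). apply cc. apply continuity_pt_minus.
        apply continuity_pt_const; intros a c; auto. apply continuity_pt_id. apply Hkc.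
      - intros x Hx. rewrite Rmin_left in Hx by lra. rewrite Rmax_right in Hx by lra.
        destruct (HQtau x ltac:(lra)) as [_ HTx]. destruct (HtauD x ltac:(lra)) as [Hx1 _].
        unfold k. rewrite HTx. rewrite HZt_eq, HPt_eq by lra.
        destruct (Hinit (t0 - tauD x)) as [_ [HPx HZx]]. lra.
        replace (t0 - tauD x - t0) with (- tauD x) in * by ring. rewrite HPx, HZx.
        replace (delta0 * (t0 - tauD x)) with (delta0 * t0 + - delta0 * tauD x) by ring.
        rewrite exp_plus.
        assert (HE : exp (- delta0 * t0) * exp (delta0 * t0) = 1).
        { rewrite <- exp_plus. replace (- delta0 * t0 + delta0 * t0) with 0 by ring. apply exp_0. }
        set (A := gamma * g * phi3 (- tauD x) * h (phi2 (- tauD x))).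
        set (B := Rf (phi2 (- tauD x))).
        assert (E : forall u, u = exp (- delta0 * t0) * (exp (delta0 * t0) * u)) by (intro u; rewrite <- Rmult_assoc, HE; ring).
        match goal with |- ?a = ?b => change (@eq R a b) end.
        unfold Rdiv. rewrite (E (exp (- delta0 * tauD x) * A * / B)) at 1. ring. }
    rewrite HN0, HP0, HZ0, EK. ring. }
  assert (HTQ : forall x, T (Q x) = x) by exact HT.
  assert (HVd : forall t, t0 < t < b -> is_derive V t 0).
  { intros t Ht. destruct (Hder t ltac:(lra)) as [HdN [HdP [tau [Hdl HdZ]]]].
    destruct (Hdel t tau Ht Hdl) as [HQtt Htau].
    unfold V. auto_derive.
    { split. eexists; exact HdN. split. eexists; exact HdP. split. eexists; exact HdZ.
      split. eexists; apply HKd. split. eexists; apply HQd. split. eexists; apply HKd.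
      split. eexists; apply HQd. exact I. }
    rewrite (is_derive_unique (fun x : R => N x) t _ HdN).
    rewrite (is_derive_unique (fun x : R => P x) t _ HdP).
    rewrite (is_derive_unique (fun x : R => Z x) t _ HdZ).
    rewrite (is_derive_unique (fun x : R => Q x) t _ (HQd t)).
    rewrite (is_derive_unique (fun x : R => K x) _ _ (HKd (Q t))).
    rewrite (is_derive_unique (fun x : R => K x) _ _ (HKd (Q t + - m))).
    replace (Q t + - m) with (Q (t - tau)) by lra.
    unfold k. rewrite !HTQ. unfold r. rewrite !HZt_eq, !HPt_eq by lra.
    replace (delta0 * (t - tau)) with (delta0 * t + - delta0 * tau) by ring. rewrite exp_plus.
    assert (Rf (P t) <> 0). { apply Rgt_not_eq. apply Rf_pos with Rd; auto. apply Hgood; lra. }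
    assert (Rf (P (t - tau)) <> 0). { apply Rgt_not_eq. apply Rf_pos with Rd; auto. apply Hgood; lra. }
    set (E1 := exp (delta0 * t)). set (E2 := exp (- delta0 * tau)).
    set (R1 := Rf (P t)) in *. set (R2 := Rf (P (t - tau))) in *.
    field. split; auto. }
  assert (HVc0 : continuous V t0).
  { destruct (Hcont t0 ltac:(lra)) as [HN [HP HZ]].
    apply cw_nonneg_cont in HN; auto. apply cw_nonneg_cont in HP; auto. apply cw_nonneg_cont in HZ; auto.
    unfold V. apply (cont_add (fun t => exp (delta0 * t) * (N t + P t + Z t - NT)) (fun t => K (Q t) - K (Q t - m))).
    - apply (cont_mul (fun t => exp (delta0 * t)) (fun t => N t + P t + Z t - NT)).
      + apply (cont_o (fun t => delta0 * t) exp). apply (cont_mul (fun _ => delta0) (fun t => t)).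
        apply cont_cst. apply continuous_id. apply continuous_exp.
      + apply (cont_sub (fun t => N t + P t + Z t) (fun _ => NT)). apply (cont_add (fun t => N t + P t) Z).
        apply (cont_add N P); auto. auto. apply cont_cst.
    - apply (cont_sub (fun t => K (Q t)) (fun t => K (Q t - m))).
      + apply (cont_o Q K); auto.
      + apply (cont_o (fun t => Q t - m) K); auto. apply (cont_sub Q (fun _ => m)); auto. apply cont_cst. }
  intros t Ht.
  assert (HVt : V t = 0).
  { assert (A1 : V t - V t0 <= 0 * (t - t0)).
    { apply deriv_le. lra. intros x Hx. exists 0. split. apply HVd; lra. lra.
      apply cc; auto. eapply der_cpt. apply HVd; auto. }
    assert (A2 : 0 * (t - t0) <= V t - V t0).
    { apply deriv_ge. lra. intros x Hx. exists 0. split. apply HVd; lra. lra.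
      apply cc; auto. eapply der_cpt. apply HVd; auto. }
    lra. }
  unfold V in HVt.
  assert (HI : 0 <= K (Q t) - K (Q t - m)).
  { unfold K. rewrite <- (chasR k 0 (Q t - m) (Q t) Hkc).
    assert (0 <= RInt k (Q t - m) (Q t)).
    { apply RInt_ge_0. lra. apply exRI; auto. intros x _. apply Hkp. }
    lra. }
  pose proof (exp_pos (delta0 * t)).
  destruct (Rle_or_lt (N t + P t + Z t) NT) as [|Hc]; auto.
  assert (0 < exp (delta0 * t) * (N t + P t + Z t - NT)) by (apply Rmult_lt_0_compat; lra).
  lra.
Qed.

Lemma sup_lemma (G : R -> Prop) lo a t1 : lo <= a <= t1 -> (forall s, lo <= s <= a -> G s) -> ~ G t1 ->
  exists Ts, a <= Ts <= t1 /\ (forall s, lo <= s < Ts -> G s) /\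
    (forall rho, 0 < rho -> exists s, Ts <= s <= t1 /\ s < Ts + rho /\ ~ G s).
Proof.
  intros Ha HG Ht1.
  set (E := fun x => lo <= x <= t1 /\ forall s, lo <= s <= x -> G s).
  assert (Hb : bound E). { exists t1. intros x [Hx _]. lra. }
  assert (Hne : exists x, E x). { exists a. split. lra. auto. }
  destruct (completeness E Hb Hne) as [Ts [Hub Hlub]].
  assert (HaT : a <= Ts). { apply Hub. split. lra. auto. }
  assert (HTt : Ts <= t1). { apply Hlub. intros x [Hx _]. lra. }
  assert (Hbef : forall s, lo <= s < Ts -> G s).
  { intros s Hs. apply NNPP. intros Hn.
    assert (is_upper_bound E s).
    { intros x [Hx Hx']. destruct (Rle_or_lt x s) as [|Hxs]; auto. exfalso. apply Hn. apply Hx'. lra. }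
    specialize (Hlub s H). lra. }
  exists Ts. split. lra. split. auto.
  intros rho Hr. apply NNPP. intros Hn.
  assert (Hall : forall s, Ts <= s <= t1 -> s < Ts + rho -> G s).
  { intros s Hs Hs2. apply NNPP. intros Hg. apply Hn. exists s. auto. }
  set (x := Rmin (Ts + rho / 2) t1).
  assert (Ex : E x).
  { split. unfold x. split. pose proof (Rmin_glb (Ts + rho/2) t1 lo). apply H; lra. apply Rmin_r.
    intros s Hs. destruct (Rlt_or_le s Ts). apply Hbef; lra. apply Hall. split. lra.
    pose proof (Rmin_r (Ts + rho / 2) t1). fold x in H0. lra.
    pose proof (Rmin_l (Ts + rho / 2) t1). fold x in H0. lra. }
  pose proof (Hub x Ex).
  assert (x = t1).
  { unfold x in *. unfold Rmin in *. destruct Rle_dec; lra. }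
  apply Ht1. apply Hall; lra.
Qed.

Lemma exp_weight (u : R -> R) c x l : is_derive u x l ->
  is_derive (fun y => exp (c * y) * u y) x (exp (c * x) * (c * u x + l)).
Proof.
  intros H. auto_derive. eexists; exact H.
  rewrite (is_derive_unique (fun x : R => u x) x _ H). ring.
Qed.

Lemma exp_weight_cont (u : R -> R) c x : continuous u x ->
  continuity_pt (fun y => exp (c * y) * u y) x.
Proof.
  intros H. apply cc. apply (cont_mul (fun y => exp (c * y)) u); auto.
  apply (cont_o (fun y => c * y) exp). apply (cont_mul (fun _ => c) (fun y => y)).
  apply cont_cst. apply continuous_id. apply continuous_exp.
Qed.

Lemma near_pos (u : R -> R) x : continuous u x -> 0 < u x ->
  exists rho, 0 < rho /\ forall y, Rabs (y - x) < rho -> 0 < u y.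
Proof.
  intros Hc Hp. destruct (cont_eps u x Hc (u x) Hp) as [d [Hd H]].
  exists d. split; auto. intros y Hy. specialize (H y Hy). apply Rabs_def2 in H. lra.
Qed.

Lemma positivity (mu lambda g gamma delta delta0 m NT : R) (f fd h hd Rf Rd : R -> R)
  (Hmu : mu > lambda) (Hlam : lambda > 0) (Hg : g > 0)
  (Hgamma : 0 < gamma <= 1) (Hdelta : delta > 0) (Hdelta0 : delta0 >= 0) (Hm : m > 0)
  (Hf : sat_fh f fd) (Hh : sat_fh h hd) (HR : sat_R Rf Rd)
  (t0 : R) (phi1 phi2 phi3 : R -> R)
  (Hphi : in_D Rf h gamma g delta0 m NT t0 phi1 phi2 phi3)
  (N P Z : R -> R)
  (Hsol : is_solution f h Rf mu lambda g gamma delta delta0 m NT t0 phi1 phi2 phi3 N P Z) :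
  forall t, 0 <= t -> 0 < N t /\ 0 < P t /\ 0 < Z t.
Proof.
  pose proof Hphi as Hphi'. pose proof Hsol as Hsol'.
  destruct Hphi as [Ht0 [Hphic _]]. destruct Hsol as [Hinit [Hcont Hder]].
  set (G := fun s => 0 < N s /\ 0 < P s /\ 0 < Z s).
  assert (HG0 : forall s, 0 <= s <= t0 -> G s).
  { intros s Hs. destruct (Hinit s Hs) as [a [b c]].
    destruct (Hphic (s - t0) ltac:(lra)) as [_ [_ [_ [p1 [p2 p3]]]]].
    unfold G; rewrite a, b, c; auto. }
  intros t Ht. change (G t). apply NNPP. intros Hnt.
  assert (Htt : t0 < t) by (destruct (Rle_or_lt t t0); auto; exfalso; apply Hnt; apply HG0; lra).
  destruct (sup_lemma G 0 t0 t) as [Ts [HTs [Hbef Hafter]]]; [lra | apply HG0 | auto |].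
  assert (HGTs : G Ts).
  { destruct (Req_dec Ts t0) as [E|E]. subst; apply HG0; lra.
    assert (HTs0 : t0 < Ts) by lra.
    assert (Hcons : forall x, t0 < x < Ts -> N x + P x + Z x <= NT).
    { intros x Hx. apply (conservation mu lambda g gamma delta delta0 m NT f fd h hd Rf Rd Hgamma Hg Hm Hh HR
        t0 phi1 phi2 phi3 Hphi' N P Z Hsol' ((x + Ts) / 2)). lra. intros s Hs. apply Hbef; lra. lra. }
    destruct (Hcont Ts ltac:(lra)) as [HNc [HPc HZc]].
    apply cw_nonneg_cont in HNc; [|lra]. apply cw_nonneg_cont in HPc; [|lra]. apply cw_nonneg_cont in HZc; [|lra].
    destruct (HG0 t0 ltac:(lra)) as [HN0 [HP0 HZ0]].
    assert (HZ : 0 < Z Ts).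
    { assert (A : 0 * (Ts - t0) <= exp (delta * Ts) * Z Ts - exp (delta * t0) * Z t0).
      { apply (deriv_ge (fun y => exp (delta * y) * Z y)). lra.
        - intros x Hx. destruct (Hder x ltac:(lra)) as [_ [_ [tau [[Htau Hint] HdZ]]]].
          eexists. split. apply exp_weight. exact HdZ.
          destruct (Hbef x ltac:(lra)) as [_ [HPx _]].
          destruct (Hbef (x - tau) ltac:(lra)) as [_ [HPd HZd]].
          assert (0 < Rf (P x)) by (apply Rf_pos with Rd; auto).
          assert (0 < Rf (P (x - tau))) by (apply Rf_pos with Rd; auto).
          assert (0 <= h (P (x - tau))) by (apply (fh_nonneg h hd); [exact Hh|lra]).
          assert (0 <= Rf (P x) * exp (- delta0 * tau) * (gamma * g * Z (x - tau) * h (P (x - tau))) / Rf (P (x - tau))).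
          { apply Rdiv_le_0_compat; auto. apply Rmult_le_pos. apply Rmult_le_pos. lra. left; apply exp_pos.
            apply Rmult_le_pos; auto. apply Rmult_le_pos. nra. lra. }
          apply Rmult_le_pos. left; apply exp_pos. lra.
        - apply exp_weight_cont. destruct (Hcont t0 ltac:(lra)) as [_ [_ HZt0]]. apply cw_nonneg_cont in HZt0; auto.
        - apply exp_weight_cont. auto. }
      pose proof (exp_pos (delta * Ts)). pose proof (exp_pos (delta * t0)).
      assert (0 < exp (delta * t0) * Z t0) by (apply Rmult_lt_0_compat; auto).
      destruct (Rlt_or_le 0 (Z Ts)) as [|Hz]; auto.
      assert (exp (delta * Ts) * Z Ts <= 0). { rewrite <- (Rmult_0_r (exp (delta * Ts))). apply Rmult_le_compat_l; lra. }
      lra. }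
    assert (HN : 0 < N Ts).
    { apply NNPP; intro Hn. apply Rnot_lt_le in Hn.
      destruct (f_small f fd (lambda / mu) Hf) as [eta [Heta Hsm]]. apply Rdiv_lt_0_compat; lra.
      destruct (cont_eps N Ts HNc eta Heta) as [rho [Hrho Hr]].
      set (a := Ts - Rmin rho (Ts - t0) / 2).
      assert (Ha : t0 < a < Ts /\ Ts - a < rho).
      { unfold a. pose proof (Rmin_l rho (Ts - t0)). pose proof (Rmin_r rho (Ts - t0)).
        assert (0 < Rmin rho (Ts - t0)) by (apply Rmin_pos; lra). lra. }
      assert (A : 0 * (Ts - a) <= N Ts - N a).
      { apply deriv_ge. lra.
        - intros x Hx. destruct (Hder x ltac:(lra)) as [HdN _]. eexists. split. exact HdN.
          destruct (Hbef x ltac:(lra)) as [HNx [HPx HZx]].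
          assert (Hx' : Rabs (x - Ts) < rho) by (apply Rabs_def1; lra).
          specialize (Hr x Hx'). apply Rabs_def2 in Hr.
          assert (f (N x) < lambda / mu) by (apply Hsm; lra).
          assert (mu * f (N x) < lambda).
          { replace lambda with (mu * (lambda / mu)) by (field; lra). apply Rmult_lt_compat_l; lra. }
          assert (0 <= h (P x)) by (apply (fh_nonneg h hd); [exact Hh|lra]).
          assert (0 <= NT - N x - P x - Z x) by (pose proof (Hcons x ltac:(lra)); lra).
          assert (0 < P x * (lambda - mu * f (N x))) by (apply Rmult_lt_0_compat; lra).
          assert (0 <= (1 - gamma) * g * Z x * h (P x)).
          { apply Rmult_le_pos; auto. apply Rmult_le_pos. apply Rmult_le_pos; lra. lra. }
          assert (0 <= delta0 * (NT - N x - P x - Z x)) by (apply Rmult_le_pos; lra).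
          assert (0 <= delta * Z x) by (apply Rmult_le_pos; lra).
          nra.
        - eapply der_cpt. apply (Hder a ltac:(lra)).
        - apply cc; auto. }
      destruct (Hbef a ltac:(lra)) as [HNa _]. lra. }
    assert (HP : 0 < P Ts).
    { apply NNPP; intro Hn. apply Rnot_lt_le in Hn.
      destruct (h_lin h hd Hh) as [L [eta [HL [Heta Hlin]]]].
      destruct (cont_eps P Ts HPc eta Heta) as [rho1 [Hr1 Hrr1]].
      destruct (cont_eps Z Ts HZc 1 Rlt_0_1) as [rho2 [Hr2 Hrr2]].
      set (rho := Rmin (Rmin rho1 rho2) (Ts - t0)).
      assert (Hrho : 0 < rho /\ rho <= rho1 /\ rho <= rho2 /\ rho <= Ts - t0).
      { unfold rho. pose proof (Rmin_l (Rmin rho1 rho2) (Ts - t0)). pose proof (Rmin_r (Rmin rho1 rho2) (Ts - t0)).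
        pose proof (Rmin_l rho1 rho2). pose proof (Rmin_r rho1 rho2).
        assert (0 < Rmin (Rmin rho1 rho2) (Ts - t0)) by (repeat apply Rmin_pos; lra). lra. }
      set (a := Ts - rho / 2).
      set (Kc := lambda + g * (Z Ts + 1) * L).
      assert (A : 0 * (Ts - a) <= exp (Kc * Ts) * P Ts - exp (Kc * a) * P a).
      { apply (deriv_ge (fun y => exp (Kc * y) * P y)). unfold a; lra.
        - intros x Hx. destruct (Hder x ltac:(unfold a in Hx; lra)) as [_ [HdP _]].
          eexists; split. apply exp_weight; exact HdP.
          apply Rmult_le_pos. left; apply exp_pos.
          destruct (Hbef x ltac:(unfold a in Hx; lra)) as [HNx [HPx HZx]].
          assert (Hx' : Rabs (x - Ts) < rho) by (apply Rabs_def1; unfold a in Hx; lra).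
          assert (H1 : Rabs (P x - P Ts) < eta) by (apply Hrr1; lra). apply Rabs_def2 in H1.
          assert (H2 : Rabs (Z x - Z Ts) < 1) by (apply Hrr2; lra). apply Rabs_def2 in H2.
          assert (Hhx : h (P x) <= L * P x) by (apply Hlin; lra).
          assert (Hh0 : 0 <= h (P x)) by (apply (fh_nonneg h hd); [exact Hh|lra]).
          assert (Hf0 : 0 <= f (N x)) by (apply (fh_nonneg f fd); [exact Hf|lra]).
          assert (Z x * h (P x) <= (Z Ts + 1) * (L * P x)).
          { apply Rle_trans with ((Z Ts + 1) * h (P x)). apply Rmult_le_compat_r; lra.
            apply Rmult_le_compat_l; lra. }
          assert (0 <= mu * P x * f (N x)) by (apply Rmult_le_pos; [apply Rmult_le_pos|]; lra).
          unfold Kc. nra.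
        - apply exp_weight_cont. apply cc. eapply der_cpt. apply (Hder a ltac:(unfold a; lra)).
        - apply exp_weight_cont. auto. }
      destruct (Hbef a ltac:(unfold a; lra)) as [_ [HPa _]].
      pose proof (exp_pos (Kc * Ts)). pose proof (exp_pos (Kc * a)).
      assert (0 < exp (Kc * a) * P a) by (apply Rmult_lt_0_compat; auto).
      assert (exp (Kc * Ts) * P Ts <= 0). { rewrite <- (Rmult_0_r (exp (Kc * Ts))). apply Rmult_le_compat_l; lra. }
      lra. }
    unfold G; auto. }
  destruct HGTs as [HN [HP HZ]].
  destruct (Hcont Ts ltac:(lra)) as [HNc [HPc HZc]].
  assert (HTp : 0 < Ts) by lra.
  apply cw_nonneg_cont in HNc; auto. apply cw_nonneg_cont in HPc; auto. apply cw_nonneg_cont in HZc; auto.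
  destruct (near_pos N Ts HNc HN) as [r1 [Hr1 H1]].
  destruct (near_pos P Ts HPc HP) as [r2 [Hr2 H2]].
  destruct (near_pos Z Ts HZc HZ) as [r3 [Hr3 H3]].
  set (rho := Rmin r1 (Rmin r2 r3)).
  assert (0 < rho /\ rho <= r1 /\ rho <= r2 /\ rho <= r3).
  { unfold rho. pose proof (Rmin_l r1 (Rmin r2 r3)). pose proof (Rmin_r r1 (Rmin r2 r3)).
    pose proof (Rmin_l r2 r3). pose proof (Rmin_r r2 r3).
    assert (0 < Rmin r1 (Rmin r2 r3)) by (repeat apply Rmin_pos; lra). lra. }
  destruct (Hafter rho ltac:(lra)) as [s [Hs1 [Hs2 Hs3]]].
  apply Hs3. assert (Rabs (s - Ts) < rho) by (apply Rabs_def1; lra).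
  unfold G. split. apply H1; lra. split. apply H2; lra. apply H3; lra.
Qed.

Theorem lemma2
  (mu lambda g gamma delta delta0 m NT : R)
  (f fd h hd Rf Rd : R -> R)
  (Hmu : mu > lambda) (Hlam : lambda > 0) (Hg : g > 0)
  (Hgamma : 0 < gamma <= 1) (Hdelta : delta > 0) (Hgd : gamma * g > delta)
  (Hdelta0 : delta0 >= 0) (Hm : m > 0) (HNT : NT > 0)
  (Hf : sat_fh f fd) (Hh : sat_fh h hd) (HR : sat_R Rf Rd)
  (NT1 : R) (HNT1 : 0 <= NT1 /\ f NT1 = lambda / mu)
  (t0 : R) (phi1 phi2 phi3 : R -> R)
  (Hphi : in_D Rf h gamma g delta0 m NT t0 phi1 phi2 phi3)
  (N P Z : R -> R)
  (Hsol : is_solution f h Rf mu lambda g gamma delta delta0 m NT t0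
            phi1 phi2 phi3 N P Z)
  (HNTgt : NT > NT1) :
  forall beta : R, beta > NT - NT1 ->
    exists t1 : R, t1 >= t0 /\ forall t : R, t >= t1 -> P t < beta.
Proof.
  intros beta Hbeta.
  pose proof (positivity mu lambda g gamma delta delta0 m NT f fd h hd Rf Rd Hmu Hlam Hg Hgamma Hdelta Hdelta0 Hm
    Hf Hh HR t0 phi1 phi2 phi3 Hphi N P Z Hsol) as Hpos.
  pose proof Hphi as Hphi'. pose proof Hsol as Hsol'.
  destruct Hphi as [Ht0 _]. destruct Hsol as [Hinit [Hcont Hder]].
  assert (Hcons : forall t, t0 < t -> N t + P t + Z t <= NT).
  { intros t Ht. apply (conservation mu lambda g gamma delta delta0 m NT f fd h hd Rf Rd Hgamma Hg Hm Hh HR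
        t0 phi1 phi2 phi3 Hphi' N P Z Hsol' (t + 1)). lra. intros s Hs. apply Hpos; lra. lra. }
  destruct (Rlt_or_le (NT - beta) 0) as [Hneg|Hc0].
  { exists (t0 + 1). split. lra. intros t Ht. pose proof (Hcons t ltac:(lra)).
    destruct (Hpos t ltac:(lra)) as [? [? ?]]. lra. }
  set (c0 := NT - beta).
  assert (Hfc : f c0 < lambda / mu). { destruct HNT1 as [_ E]. rewrite <- E. apply f_smono with fd; auto. unfold c0; lra. }
  assert (Hmuf : mu * f c0 - lambda < 0).
  { assert (mu * f c0 < mu * (lambda / mu)) by (apply Rmult_lt_compat_l; lra).
    replace (mu * (lambda / mu)) with lambda in H by (field; lra). lra. }
  set (kap := beta * (mu * f c0 - lambda)).
  assert (Hbpos : 0 < beta) by lra.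
  assert (Hkap : kap < 0) by (unfold kap; nra).
  assert (Hdec : forall t, t0 < t -> beta <= P t -> exists l, is_derive P t l /\ l <= kap).
  { intros t Ht HPb. destruct (Hder t Ht) as [_ [HdP _]]. eexists. split. exact HdP.
    destruct (Hpos t ltac:(lra)) as [HN [HP HZ]]. pose proof (Hcons t Ht).
    assert (f (N t) <= f c0) by (apply f_mono with fd; auto; unfold c0; lra).
    assert (0 <= h (P t)) by (apply (fh_nonneg h hd); [exact Hh|lra]).
    assert (0 <= g * Z t * h (P t)) by (apply Rmult_le_pos; [apply Rmult_le_pos|]; lra).
    assert (mu * f (N t) - lambda <= mu * f c0 - lambda) by (apply Rplus_le_compat_r; apply Rmult_le_compat_l; lra).
    assert (P t * (mu * f (N t) - lambda) <= beta * (mu * f c0 - lambda)) by nra.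
    unfold kap. nra. }
  assert (Hcpt : forall t, t0 < t -> continuity_pt P t).
  { intros t Ht. destruct (Hder t Ht) as [_ [HdP _]]. eapply der_cpt; exact HdP. }
  assert (Hex : exists t1, t0 + 1 <= t1 /\ P t1 < beta).
  { apply NNPP. intros Hn.
    assert (Hall : forall t, t0 + 1 <= t -> beta <= P t).
    { intros t Ht. apply Rnot_lt_le. intros Hl. apply Hn. exists t; auto. }
    set (a := t0 + 1). assert (Ha : a = t0 + 1) by reflexivity. clearbody a.
    destruct (Hpos a ltac:(lra)) as [_ [HPa _]].
    set (X := a + P a / (- kap) + 1).
    assert (0 < P a / (- kap)) by (apply Rdiv_lt_0_compat; lra).
    assert (P X - P a <= kap * (X - a)).
    { apply deriv_le. unfold X; lra. intros x Hx. apply Hdec. unfold X in Hx; lra. apply Hall. unfold X in Hx; lra.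
      apply Hcpt; lra. apply Hcpt; unfold X; lra. }
    replace (kap * (X - a)) with (- P a + kap) in H0 by (unfold X; field; lra).
    destruct (Hpos X ltac:(unfold X; lra)) as [_ [HPX _]]. lra. }
  destruct Hex as [t1 [Ht1 HPt1]].
  exists t1. split. lra. intros t2 Ht2. apply NNPP. intros Hn.
  destruct (sup_lemma (fun s => P s < beta) t1 t1 t2) as [Ts [HTs [Hbef Hafter]]]; [lra| |auto|].
  { intros s Hs. replace s with t1 by lra. auto. }
  assert (HPTs : beta <= P Ts).
  { apply Rnot_lt_le. intros HPl.
    destruct (Hcont Ts ltac:(lra)) as [_ [HPc _]]. apply cw_nonneg_cont in HPc; [|lra].
    destruct (cont_eps P Ts HPc (beta - P Ts) ltac:(lra)) as [rho [Hr H]].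
    destruct (Hafter rho Hr) as [s [Hs1 [Hs2 Hs3]]]. apply Hs3.
    assert (Rabs (s - Ts) < rho) by (apply Rabs_def1; lra). specialize (H s H0). apply Rabs_def2 in H. lra. }
  assert (HTs1 : t1 < Ts). { destruct (Req_dec Ts t1). subst. lra. lra. }
  destruct (Hdec Ts ltac:(lra) HPTs) as [l [Hl Hlk]].
  assert (0 <= l).
  { apply (deriv_left_ge P Ts l (Ts - t1)). lra. auto. intros x Hx.
    assert (P x < beta) by (apply Hbef; lra). lra. }
  lra.
Qed.
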